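(* Let $A,B\in\mathbb D[X]$ both have degree $d$ and valuation $0$, with symmetric subresultants $(S_i)_{-1\le i\le d}$. Fix $\ell\in\{1,\dots,\lfloor d/2\rfloor\}$ and let $(\widehat S_j)_{-1\le j\le 2\ell-1}$ be the symmetric subresultants of $A_{|\ell}$ and $B_{|\ell}$ (polynomials of degree $2\ell-1$, truncated with formal degree $d$). Then for every $1\le j<\ell$, $$S_{j|(\ell-j)}=\widehat S_{j|(\ell-j)},$$ where $S_j$ is truncated as a polynomial of formal degree $d-j$ and $\widehat S_j$ as a polynomial of formal degree $2\ell-1-j$. In particular $S_j(0)=\widehat S_j(0)$ and $\mathrm{co}_{d-j}(S_j)=\mathrm{co}_{2\ell-1-j}(\widehat S_j)$ for $1\le j<\ell$.
   Context: $\mathbb D$ is a subring of $\mathbb C$; $v(P)$ is the largest $v$ with $X^v\mid P$; $\mathrm{co}_k(P)$ is the coefficient of $X^k$. Symmetric subresultants: let $A=\sum_{i=0}^n a_iX^i$, $B=\sum_{i=0}^n b_iX^i$ with $\deg A=n\ge1$ ($B$ of formal degree $n$). Put $a_i=b_i=0$ for $i<0$ or $i>n$. For $1\le j\le n$ and $0\le\ell\le n-j$, let $\mathrm{Sylv}_{j,\ell}$ be the $2j\times 2j$ matrix whose $r$-th row, $1\le r\le j$, is $(a_{1-r},\dots,a_{j-1-r},\ a_{j-r+\ell},\ a_{n+1-r},\dots,a_{n+j-r})$ and whose $(j+r)$-th row is the same with $a$ replaced by $b$. The symmetric subresultants are $S_{-1}=A$, $S_0=B$, $S_j=\sum_{\ell=0}^{n-j}\det(\mathrm{Sylv}_{j,\ell})X^\ell$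 ($1\le j\le n$). Symmetric truncation: for $P=\sum_{i=0}^Dp_iX^i$ regarded as of formal degree $D$ and $m\in\{1,\dots,\lfloor D/2\rfloor\}$, $P_{|m}=p_0+\dots+p_{m-1}X^{m-1}+p_{D-m+1}X^m+\dots+p_DX^{2m-1}$; $P_{|0}=0$; $P_{|m}=P$ for $m>\lfloor D/2\rfloor$. *)

(* Defs.v *)
(* C is modelled as complex numbers over Stdlib's reals
   (Rstruct makes Stdlib's R a realType, hence an rcfType, and
   mathcomp-real-closed's complex R is the algebraically closed field R[i]). *)
From Stdlib Require Rdefinitions.
From HB Require Import structures.
From mathcomp Require Import all_boot all_order all_algebra.
From mathcomp Require Import Rstruct.
From mathcomp.real_closed Require Import complex.

Set Implicit Arguments.
Unset Strict Implicit.
Unset Printing Implicit Defensive.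
Import Order.TTheory GRing.Theory Num.Theory.
Local Open Scope ring_scope.

Notation Cc := (complex Rdefinitions.R).

Section Subres.
Variable R : comNzRingType.

Definition fcoef (n : nat) (P : {poly R}) (k : int) : R :=
  match k with
  | Posz m => if (m <= n)%N then P`_m else 0
  | Negz _ => 0
  end.

(* Sylv_{j,l}: the 2j x 2j matrix. 0-based row i: for i < j it is row
   r = i+1 built from A, for i >= j it is row j + r (r = i-j+1) built from B.
   0-based column c: c < j-1 gives a_{c+1-r}; c = j-1 gives a_{j-r+l};
   c >= j gives a_{n+1-r+(c-j)}. *)
Definition sylv (n : nat) (A B : {poly R}) (j l : nat) : 'M[R]_(j + j) :=
  \matrix_(i < j + j, c < j + j)
    let P := if (i < j)%N then A else B in
    let r : int := (if (i < j)%N then i.+1 else (i - j).+1)%N in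
    fcoef n P
      (if (c < j.-1)%N then (c%:Z + 1 - r)%R
       else if c == j.-1 :> nat then (j%:Z - r + l%:Z)%R
       else (n%:Z + 1 - r + (c%:Z - j%:Z))%R).

Definition ssubres (n : nat) (A B : {poly R}) (j : int) : {poly R} :=
  match j with
  | Negz _ => A
  | Posz 0 => B
  | Posz j' => \sum_(l < (n - j').+1) \det (sylv n A B j' l) *: 'X^l
  end.

Definition strunc (D m : nat) (P : {poly R}) : {poly R} :=
  if m == 0%N then 0
  else if (D./2 < m)%N then P
  else \sum_(i < m) P`_i *: 'X^i + \sum_(i < m) P`_(D - m + 1 + i) *: 'X^(m + i).

End Subres.

(* Main.v *)
Require Import Defs.
From HB Require Import structures.
From mathcomp Require Import all_boot all_order all_algebra.
From mathcomp Require Import Rstruct.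
From mathcomp.real_closed Require Import complex.
From mathcomp Require Import zify.
Import Order.TTheory GRing.Theory Num.Theory.
Local Open Scope ring_scope.

Section Aux.
Variable R : comNzRingType.

Lemma half_ltF (D m : nat) : (m + m <= D)%N -> (D./2 < m)%N = false.
Proof.
move=> h; apply/negbTE; rewrite -leqNgt.
have := half_leq h; by rewrite addnn doubleK.
Qed.

Lemma coef_strunc (D m : nat) (P : {poly R}) i :
  (0 < m)%N -> (m + m <= D)%N ->
  (strunc D m P)`_i = if (i < m)%N then P`_i
     else if (i < m + m)%N then P`_(D - m + 1 + (i - m)) else 0.
Proof.
move=> m0 hD; rewrite /strunc.
have -> : (m == 0%N) = false by apply/negbTE; rewrite -lt0n.
rewrite half_ltF // -!poly_def.
have -> : \sum_(i < m) P`_(D - m + 1 + i) *: 'X^(m + i)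
   = 'X^m * \poly_(i < m) P`_(D - m + 1 + i).
  rewrite poly_def mulr_sumr; apply: eq_bigr => k _.
  by rewrite exprD scalerAr.
rewrite coefD coef_poly coefXnM coef_poly.
case: ltnP => h1; first by rewrite addr0.
rewrite add0r; have -> : (i - m < m)%N = (i < m + m)%N by lia.
by [].
Qed.

Lemma coef_ssubres n (A B : {poly R}) (j : nat) k : (1 <= j)%N ->
  (ssubres n A B j)`_k = if (k <= n - j)%N then \det (sylv n A B j k) else 0.
Proof.
case: j => // j _ /=.
by rewrite -(@poly_def _ _ (fun l => \det (sylv n A B j.+1 l))) coef_poly ltnS.
Qed.

Variables (d l : nat).
Hypothesis (Hl1 : (1 <= l)%N) (Hl2 : (l + l <= d)%N).

Lemma fcoef_low (P : {poly R}) (k : int) : (k < l%:Z)%R ->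
  fcoef d P k = fcoef (2 * l - 1) (strunc d l P) k.
Proof.
case: k => [m|m] //= h.
have hm : (m < l)%N by lia.
rewrite coef_strunc // hm.
have -> : (m <= d)%N by lia.
by have -> : (m <= 2 * l - 1)%N by lia.
Qed.

Lemma fcoef_high (P : {poly R}) (m : nat) : (l <= m)%N ->
  fcoef d P (m + (d - 2 * l + 1))%N = fcoef (2 * l - 1) (strunc d l P) m.
Proof.
move=> h /=; case: (leqP m (2 * l - 1)) => h2.
  have -> : (m + (d - 2 * l + 1) <= d)%N by lia.
  rewrite coef_strunc // ltnNge h /=.
  have -> : (m < l + l)%N by lia.
  congr (P`_ _); lia.
by have -> : (m + (d - 2 * l + 1) <= d)%N = false by lia.
Qed.

Lemma entry (P : {poly R}) (j k k' r c : nat) :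
  (1 <= j)%N -> (j < l)%N -> (1 <= r <= j)%N -> (c < j + j)%N ->
  ((k < l - j)%N /\ k' = k \/ (l <= k')%N /\ k = (k' + (d - 2 * l + 1))%N) ->
  fcoef d P
      (if (c < j.-1)%N then (c%:Z + 1 - r%:Z)%R
       else if c == j.-1 :> nat then (j%:Z - r%:Z + k%:Z)%R
       else (d%:Z + 1 - r%:Z + (c%:Z - j%:Z))%R)
  = fcoef (2 * l - 1) (strunc d l P)
      (if (c < j.-1)%N then (c%:Z + 1 - r%:Z)%R
       else if c == j.-1 :> nat then (j%:Z - r%:Z + k'%:Z)%R
       else ((2 * l - 1)%N%:Z + 1 - r%:Z + (c%:Z - j%:Z))%R).
Proof.
move=> hj1 hjl hr hc hk.
case: ifP => h1; first by apply: fcoef_low; lia.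
case: ifP => h2.
  case: hk => [[hk ->]|[hk ->]]; first by apply: fcoef_low; lia.
  have -> : (j%:Z - r%:Z + (k' + (d - 2 * l + 1))%N%:Z)%R
     = Posz ((j - r + k') + (d - 2 * l + 1))%N by lia.
  have -> : (j%:Z - r%:Z + k'%:Z)%R = Posz (j - r + k')%N by lia.
  by apply: fcoef_high; lia.
have -> : (d%:Z + 1 - r%:Z + (c%:Z - j%:Z))%R
   = Posz ((2 * l - r + (c - j)) + (d - 2 * l + 1))%N by lia.
have -> : ((2 * l - 1)%N%:Z + 1 - r%:Z + (c%:Z - j%:Z))%R
   = Posz (2 * l - r + (c - j))%N by lia.
by apply: fcoef_high; lia.
Qed.

Lemma sylv_trunc (A B : {poly R}) (j k k' : nat) :
  (1 <= j)%N -> (j < l)%N ->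
  ((k < l - j)%N /\ k' = k \/ (l <= k')%N /\ k = (k' + (d - 2 * l + 1))%N) ->
  sylv d A B j k = sylv (2 * l - 1) (strunc d l A) (strunc d l B) j k'.
Proof.
move=> hj1 hjl hk; apply/matrixP => i c; rewrite !mxE /=.
have hc := ltn_ord c; have hi := ltn_ord i.
case: ifP => hij; apply: entry => //; lia.
Qed.

End Aux.

Theorem lemma8 (D : {pred Cc}) (HD : subring_closed D)
  (d : nat) (A B : {poly Cc})
  (HAD : A \is a polyOver D) (HBD : B \is a polyOver D)
  (HdegA : size A = d.+1) (HdegB : size B = d.+1)
  (HvA : ~~ ('X %| A)) (HvB : ~~ ('X %| B))
  (l : nat) (Hl1 : (1 <= l)%N) (Hl2 : (l <= d./2)%N) :
  let S := ssubres d A B in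
  let Shat := ssubres (2 * l - 1) (strunc d l A) (strunc d l B) in
  forall j : nat, (1 <= j)%N -> (j < l)%N ->
    [/\ strunc (d - j) (l - j) (S j) = strunc (2 * l - 1 - j) (l - j) (Shat j),
        (S j)`_0 = (Shat j)`_0
      & (S j)`_(d - j) = (Shat j)`_(2 * l - 1 - j)].
Proof.
move=> S Shat j hj1 hjl.
have Hl2' : (l + l <= d)%N by rewrite addnn -geq_half_double.
have key : forall i, (i < l - j)%N ->
  (S j)`_i = (Shat j)`_i /\ (S j)`_(d - l + 1 + i) = (Shat j)`_(l + i).
  move=> i hi; rewrite /S /Shat !coef_ssubres //.
  have -> : (i <= d - j)%N by lia.
  have -> : (i <= 2 * l - 1 - j)%N by lia.
  have -> : (d - l + 1 + i <= d - j)%N by lia.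
  have -> : (l + i <= 2 * l - 1 - j)%N by lia.
  split; congr (\det _); apply: sylv_trunc => //.
    by left.
  by right; split; lia.
split.
- rewrite /strunc.
  have -> : ((l - j)%N == 0%N) = false by apply/negbTE; lia.
  rewrite !half_ltF; try lia.
  congr (_ + _); apply: eq_bigr => i _; congr (_ *: _).
    by case: (key i (ltn_ord i)).
  have -> : (d - j - (l - j) + 1 + i = d - l + 1 + i)%N by lia.
  have -> : (2 * l - 1 - j - (l - j) + 1 + i = l + i)%N by lia.
  by case: (key i (ltn_ord i)).
- by case: (key 0%N ltac:(lia)).
- case: (key (l - j - 1)%N ltac:(lia)) => _.
  have -> : (d - l + 1 + (l - j - 1) = d - j)%N by lia.
  by have -> : (l + (l - j - 1) = 2 * l - 1 - j)%N by lia.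
Qed.
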